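(* For any integers $k\ge4$ and $L\ge1$ there exists $f_{k,L}\in\mathcal{NN}_{2,1}(3k2^k+3,L)$ such that $f_{k,L}([-1,1]^2)\subseteq[-1,1]$ and \[ |f_{k,L}(x,y)-xy|\le 2^{-2kL-1}\qquad\text{for all }x,y\in[-1,1]. \]
   Context: $\mathcal{NN}_{d,k}(W,L)$: set of maps $g:\mathbb{R}^d\to\mathbb{R}^k$ given by $g_0(x)=x$, $g_{\ell+1}(x)=\sigma(A_\ell g_\ell(x)+b_\ell)$ ($\ell=0,\dots,L-1$), $g(x)=A_Lg_L(x)+b_L$, with $A_\ell\in\mathbb{R}^{N_{\ell+1}\times N_\ell}$, $b_\ell\in\mathbb{R}^{N_{\ell+1}}$, $N_0=d$, $N_{L+1}=k$, $\max\{N_1,\dots,N_L\}\le W$, $\sigma(t)=\max\{t,0\}$ componentwise. *)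

(* Defs.v *)
From Stdlib Require Import Reals Lra Lia List.
Open Scope R_scope.

(* Vectors in R^n are represented as functions nat -> R, only the
   coordinates 0..n-1 being meaningful; a matrix in R^{m x n} is a function
   nat -> nat -> R, only entries (i,j) with i<m, j<n being meaningful. *)

Definition relu (t : R) : R := Rmax t 0.

Record layer := mkLayer {
  l_in : nat;
  l_out : nat;
  l_A : nat -> nat -> R;
  l_b : nat -> R }.

Definition affine (l : layer) (x : nat -> R) : nat -> R :=
  fun i => if Nat.ltb i (l_out l)
           then sum_f_R0 (fun j => if Nat.ltb j (l_in l) then l_A l i j * x j else 0)
                  (l_in l) + l_b l i
           else 0.

Definition relu_layer (l : layer) (x : nat -> R) : nat -> R :=
  fun i => if Nat.ltb i (l_out l) then relu (affine l x i) else 0.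

Record network := mkNet { hidden : list layer; output : layer }.

Definition realize (N : network) (x : nat -> R) : nat -> R :=
  affine (output N) (fold_left (fun g l => relu_layer l g) (hidden N) x).

Fixpoint chain (d : nat) (ls : list layer) (last : layer) : Prop :=
  match ls with
  | nil => l_in last = d
  | l :: ls' => l_in l = d /\ chain (l_out l) ls' last
  end.

Definition in_NN (d k W L : nat) (N : network) : Prop :=
  length (hidden N) = L /\
  chain d (hidden N) (output N) /\
  l_out (output N) = k /\
  (forall l, In l (hidden N) -> (l_out l <= W)%nat).

Definition vec2 (x y : R) : nat -> R :=
  fun i => match i with 0%nat => x | 1%nat => y | _ => 0 end.

(* Main.v *)
Require Import Defs.
From Stdlib Require Import Reals Lra Lia List Psatz FunctionalExtensionality.
Open Scope R_scope.

Fixpoint sumn (n:nat) (f:nat->R) : R :=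
  match n with O => 0 | S n' => sumn n' f + f n' end.

Lemma sumn_ext n f g : (forall i, (i<n)%nat -> f i = g i) -> sumn n f = sumn n g.
Proof. induction n; simpl; intros H; auto. rewrite IHn by (intros; apply H; lia).
  rewrite H by lia. reflexivity. Qed.

Lemma sumn_add n f g : sumn n (fun i => f i + g i) = sumn n f + sumn n g.
Proof. induction n; simpl; [lra| rewrite IHn; lra]. Qed.

Lemma sumn_zero n : sumn n (fun _ => 0) = 0.
Proof. induction n; simpl; [lra| rewrite IHn; lra]. Qed.

Lemma sumn_split a b f : sumn (a+b) f = sumn a f + sumn b (fun i => f (a+i)%nat).
Proof. induction b; simpl. rewrite Nat.add_0_r; lra.
  rewrite Nat.add_succ_r; simpl; rewrite IHb; lra. Qed.

Lemma sumn_trunc n m f h : (m<=n)%nat -> (forall i, (i<m)%nat -> f i = h i) ->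
  (forall i, (m<=i<n)%nat -> f i = 0) -> sumn n f = sumn m h.
Proof. revert m. induction n; intros m H0 H1 H2.
  assert (m=0)%nat by lia; subst; reflexivity.
  destruct (Nat.eq_dec m (S n)). subst. apply sumn_ext; auto.
  simpl. rewrite (IHn m) by (try lia; auto; intros; apply H2; lia).
  rewrite H2 by lia. lra. Qed.

Lemma sum_guard n f : sum_f_R0 (fun j => if Nat.ltb j n then f j else 0) n = sumn n f.
Proof.
  assert (H: forall m, sum_f_R0 (fun j => if Nat.ltb j n then f j else 0) m
     = sumn (S m) (fun j => if Nat.ltb j n then f j else 0)).
  { induction m; simpl. lra. simpl in IHm. rewrite IHm. reflexivity. }
  rewrite H. simpl. rewrite Nat.ltb_irrefl. rewrite Rplus_0_r. apply sumn_ext.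
  intros. destruct (Nat.ltb_spec i n); [reflexivity|lia]. Qed.

Lemma relu_pos t : 0 <= t -> relu t = t.
Proof. intros; unfold relu; apply Rmax_left; lra. Qed.
Lemma relu_neg t : t <= 0 -> relu t = 0.
Proof. intros; unfold relu; apply Rmax_right; lra. Qed.
Lemma relu_ge0 t : 0 <= relu t.
Proof. unfold relu; apply Rmax_r. Qed.

Lemma relu_abs z c : 0 <= c -> relu (z - c) + relu (- z - c) = relu (Rabs z - c).
Proof. intros Hc. destruct (Rle_dec 0 z).
  - rewrite Rabs_right by lra. rewrite (relu_neg (-z-c)) by lra. lra.
  - rewrite Rabs_left by lra. rewrite (relu_neg (z-c)) by lra. lra. Qed.

Lemma abs_sq z : Rabs z * Rabs z = z * z.
Proof. destruct (Rle_dec 0 z); [rewrite Rabs_right by lra|rewrite Rabs_left by lra]; ring. Qed.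

Lemma Rdiv_le_0_compat a b : 0 <= a -> 0 < b -> 0 <= a / b.
Proof. intros. unfold Rdiv. apply Rmult_le_pos; [lra|]. apply Rlt_le, Rinv_0_lt_compat; lra. Qed.

Definition G N (g : nat -> R) (w : R) : R :=
  sumn N (fun i => g i * relu (w - INR i / INR N)).
Definition Phi N (g : nat -> R) (z : R) : R :=
  sumn N (fun i => g i * (relu (z - INR i / INR N) + relu (- z - INR i / INR N))).

Lemma Phi_G N g z : Phi N g z = G N g (Rabs z).
Proof. unfold Phi, G. apply sumn_ext. intros i Hi. rewrite relu_abs. reflexivity.
  assert (0 < INR N) by (apply lt_0_INR; lia).
  assert (0 <= INR i) by apply pos_INR.
  apply Rdiv_le_0_compat; lra. Qed.

Definition dco N (i:nat) : R :=
  if Nat.eqb i 0 then INR N else if Nat.even i then 2 * INR N else - (2 * INR N).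
Definition eco N (i:nat) : R := if Nat.eqb i 0 then 1 - / INR N else - (2 / INR N).
Definition dlt (i:nat) : R := if Nat.eqb i 0 then 1 else 0.

Lemma cf_e N w j : INR N <> 0 ->
  sumn (S j) (fun i => eco N i * (w - INR i / INR N))
  = w - w * (2 * INR j + 1) / INR N + INR j * (INR j + 1) / (INR N * INR N).
Proof. intros HN. induction j.
  - simpl. unfold eco; simpl. field; auto.
  - change (sumn (S (S j)) (fun i => eco N i * (w - INR i / INR N)))
      with (sumn (S j) (fun i => eco N i * (w - INR i / INR N)) + eco N (S j) * (w - INR (S j) / INR N)).
    rewrite IHj. unfold eco; simpl Nat.eqb. cbv iota. rewrite S_INR. field; auto. Qed.

Lemma cf_d N w j : INR N <> 0 ->
  sumn (S j) (fun i => dco N i * (w - INR i / INR N))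
  = if Nat.even j then INR N * w - INR j else INR j + 1 - INR N * w.
Proof. intros HN. induction j.
  - simpl. unfold dco; simpl. field; auto.
  - change (sumn (S (S j)) (fun i => dco N i * (w - INR i / INR N)))
      with (sumn (S j) (fun i => dco N i * (w - INR i / INR N)) + dco N (S j) * (w - INR (S j) / INR N)).
    rewrite IHj. unfold dco; simpl Nat.eqb. cbv iota.
    rewrite Nat.even_succ, <- Nat.negb_even.
    destruct (Nat.even j); cbn [negb]; rewrite S_INR; field; auto. Qed.

Lemma cf_dl N w j : INR N <> 0 ->
  sumn (S j) (fun i => dlt i * (w - INR i / INR N)) = w.
Proof. intros HN. induction j.
  - simpl. unfold dlt; simpl. field; auto.
  - change (sumn (S (S j)) (fun i => dlt i * (w - INR i / INR N)))
      with (sumn (S j) (fun i => dlt i * (w - INR i / INR N)) + dlt (S j) * (w - INR (S j) / INR N)).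
    rewrite IHj. unfold dlt; simpl. ring. Qed.

Lemma cell n t : (1 <= n)%nat -> 0 <= t <= INR n ->
  exists j, (j < n)%nat /\ INR j <= t <= INR j + 1.
Proof. induction n; intros Hn Ht. lia. destruct n.
  - exists 0%nat. split. lia. simpl in *. lra.
  - destruct (Rle_dec t (INR (S n))).
    + destruct IHn as [j [Hj Hj']]. lia. lra. exists j. split; [lia|lra].
    + exists (S n). split. lia. rewrite (S_INR (S n)) in Ht. lra. Qed.

Lemma G_cell N g w j : (j < N)%nat -> INR j <= INR N * w <= INR j + 1 ->
  G N g w = sumn (S j) (fun i => g i * (w - INR i / INR N)).
Proof. intros Hj Hw. unfold G.
  assert (HN: 0 < INR N) by (apply lt_0_INR; lia).
  assert (HI: 0 < / INR N) by (apply Rinv_0_lt_compat; lra).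
  apply sumn_trunc. lia.
  - intros i Hi. rewrite relu_pos. reflexivity.
    assert (INR i <= INR j) by (apply le_INR; lia).
    replace (w - INR i / INR N) with ((INR N * w - INR i) * / INR N) by (field; lra).
    apply Rmult_le_pos; lra.
  - intros i Hi. rewrite relu_neg. ring.
    assert (INR (S j) <= INR i) by (apply le_INR; lia). rewrite S_INR in H.
    replace (w - INR i / INR N) with ((INR N * w - INR i) * / INR N) by (field; lra).
    nra. Qed.

Lemma step N w : (1 <= N)%nat -> 0 <= w <= 1 ->
  G N dlt w = w /\ 0 <= G N (dco N) w <= 1 /\ 0 <= G N (eco N) w /\
  w * w = (w - G N (eco N) w - G N (dco N) w / (INR N * INR N))
          + G N (dco N) w * G N (dco N) w / (INR N * INR N) /\
  0 <= w - G N (eco N) w - G N (dco N) w / (INR N * INR N).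
Proof. intros HN1 Hw.
  assert (HN: 1 <= INR N) by (apply (le_INR 1); lia).
  destruct (cell N (INR N * w)) as [j [Hj Ht]]. lia. nra.
  assert (HjN: INR j + 1 <= INR N) by (rewrite <- S_INR; apply le_INR; lia).
  assert (Ha: 0 <= INR j) by apply pos_INR.
  rewrite !(G_cell N _ w j Hj Ht).
  rewrite cf_dl, cf_e, cf_d by lra.
  set (n := INR N) in *. set (a := INR j) in *. set (t := n * w) in *.
  assert (Hwt: w = t / n) by (unfold t; field; lra).
  assert (HE: w - w * (2 * a + 1) / n + a * (a + 1) / (n * n)
     = (n * t - t * (2*a+1) + a*(a+1)) / (n*n)) by (rewrite Hwt; field; lra).
  assert (HEp: 0 <= n * t - t * (2*a+1) + a*(a+1)).
  { assert (0 <= t * (n - a - 1)) by (apply Rmult_le_pos; lra).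
    assert (0 <= a * (a + 1 - t)) by (apply Rmult_le_pos; lra). nra. }
  assert (Hnn: 0 < n * n) by nra.
  split. reflexivity.
  rewrite HE.
  destruct (Nat.even j) eqn:Ev.
  - split. lra. split. apply Rdiv_le_0_compat; lra.
    split. rewrite Hwt. field. lra.
    match goal with |- 0 <= ?X => replace X with (a * (2*t - a) / (n*n)) by (rewrite Hwt; field; lra) end.
    apply Rdiv_le_0_compat; [|lra]. apply Rmult_le_pos; lra.
  - assert (Hj1: (1 <= j)%nat) by (destruct j; [discriminate|lia]).
    assert (Ha1: 1 <= a) by (apply (le_INR 1); lia).
    split. lra. split. apply Rdiv_le_0_compat; lra.
    split. rewrite Hwt. field. lra.
    match goal with |- 0 <= ?X => replace X with ((a+1) * (2*t - a - 1) / (n*n)) by (rewrite Hwt; field; lra) end.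
    apply Rdiv_le_0_compat; [|lra]. apply Rmult_le_pos; lra.
Qed.

Ltac ltbs := repeat match goal with
  | |- context[Nat.ltb ?x ?y] => destruct (Nat.ltb_spec x y); try (exfalso; lia)
  end.

Definition Bn (N:nat) := (2*N+1)%nat.
Definition Mn (N:nat) := (2*Bn N)%nat.

Definition unitb N (z s : R) (q:nat) : R :=
  if Nat.ltb q N then relu (z - INR q / INR N)
  else if Nat.ltb q (2*N) then relu (- z - INR (q - N) / INR N)
  else relu s.

Definition unitval N zu su zv sv (r:nat) : R :=
  if Nat.ltb r (Bn N) then unitb N zu su r
  else if Nat.ltb r (Mn N) then unitb N zv sv (r - Bn N) else 0.

Definition coefb N (a:R) (g:nat->R) (q:nat) : R :=
  if Nat.ltb q N then g q else if Nat.ltb q (2*N) then g (q - N)%nat else a.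

Definition lin N (b:bool) a g (j:nat) : R :=
  if Nat.ltb j (Bn N) then (if b then 0 else coefb N a g j)
  else if Nat.ltb j (Mn N) then (if b then coefb N a g (j - Bn N) else 0) else 0.

Lemma blk_sum N a g z s :
  sumn (Bn N) (fun q => coefb N a g q * unitb N z s q) = a * relu s + Phi N g z.
Proof.
  replace (Bn N) with (N + (N + 1))%nat by (unfold Bn; lia).
  rewrite !sumn_split. simpl sumn at 3.
  unfold Phi.
  rewrite (sumn_ext N (fun i => coefb N a g i * unitb N z s i)
     (fun i => g i * relu (z - INR i / INR N))).
  2:{ intros i Hi. unfold coefb, unitb. ltbs. reflexivity. }
  rewrite (sumn_ext N (fun i => coefb N a g (N + i) * unitb N z s (N + i))
     (fun i => g i * relu (- z - INR i / INR N))).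
  2:{ intros i Hi. unfold coefb, unitb. ltbs. replace (N + i - N)%nat with i by lia. reflexivity. }
  rewrite (sumn_ext N (fun i => g i * (relu (z - INR i / INR N) + relu (- z - INR i / INR N)))
     (fun i => g i * relu (z - INR i / INR N) + g i * relu (- z - INR i / INR N))).
  2:{ intros; ring. }
  rewrite sumn_add.
  unfold coefb, unitb. ltbs. lra.
Qed.

Lemma lin_sum N b a g zu su zv sv :
  sumn (Mn N) (fun j => lin N b a g j * unitval N zu su zv sv j)
  = a * relu (if b then sv else su) + Phi N g (if b then zv else zu).
Proof.
  unfold Mn. replace (2 * Bn N)%nat with (Bn N + Bn N)%nat by lia.
  rewrite sumn_split.
  rewrite (sumn_ext (Bn N) (fun j => lin N b a g j * unitval N zu su zv sv j)
     (fun q => (if b then 0 else coefb N a g q) * unitb N zu su q)).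
  2:{ intros i Hi. unfold lin, unitval. ltbs. reflexivity. }
  rewrite (sumn_ext (Bn N) (fun j => lin N b a g (Bn N + j) * unitval N zu su zv sv (Bn N + j))
     (fun q => (if b then coefb N a g q else 0) * unitb N zv sv q)).
  2:{ intros i Hi. unfold lin, unitval, Mn. ltbs. replace (Bn N + i - Bn N)%nat with i by lia. reflexivity. }
  destruct b.
  - rewrite (sumn_ext _ _ (fun _ => 0)) by (intros; ring). rewrite sumn_zero, blk_sum. ring.
  - rewrite (sumn_ext _ (fun q => 0 * unitb N zv sv q) (fun _ => 0)) by (intros; ring).
    rewrite sumn_zero, blk_sum. ring.
Qed.

Definition blkb N r := negb (Nat.ltb r (Bn N)).
Definition posn N r := if Nat.ltb r (Bn N) then r else (r - Bn N)%nat.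
Definition biasf N (r:nat) : R :=
  if Nat.ltb (posn N r) N then - (INR (posn N r) / INR N)
  else if Nat.ltb (posn N r) (2*N) then - (INR (posn N r - N) / INR N) else 0.

Definition scoef N c i := c * (dlt i - eco N i - dco N i / (INR N * INR N)).
Definition qcoef N c i := c * (dlt i - eco N i).

Definition midA N c r j :=
  if Nat.ltb (posn N r) N then lin N (blkb N r) 0 (dco N) j
  else if Nat.ltb (posn N r) (2*N) then - lin N (blkb N r) 0 (dco N) j
  else lin N (blkb N r) 1 (scoef N c) j.
Definition mid N c := mkLayer (Mn N) (Mn N) (midA N c) (biasf N).

Lemma sumn_opp n f : sumn n (fun i => - f i) = - sumn n f.
Proof. induction n; simpl; [lra| rewrite IHn; lra]. Qed.

Lemma mid_spec N c zu su zv sv :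
  relu_layer (mid N c) (unitval N zu su zv sv)
  = unitval N (Phi N (dco N) zu) (relu su + Phi N (scoef N c) zu)
              (Phi N (dco N) zv) (relu sv + Phi N (scoef N c) zv).
Proof.
  apply functional_extensionality. intros r.
  unfold relu_layer, affine. simpl l_out. simpl l_in. simpl l_A. simpl l_b.
  rewrite sum_guard.
  destruct (Nat.ltb_spec r (Mn N)).
  2:{ unfold unitval, Mn, Bn in *. ltbs. reflexivity. }
  unfold midA, biasf.
  destruct (Nat.ltb (posn N r) N) eqn:E1.
  - rewrite lin_sum. unfold unitval, unitb, blkb, posn in *. unfold Mn in *.
    destruct (Nat.ltb_spec r (Bn N)); simpl; ltbs; f_equal; try lra.
    all: apply Nat.ltb_lt in E1; lia.
  - destruct (Nat.ltb (posn N r) (2*N)) eqn:E2.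
    + rewrite (sumn_ext _ _ (fun j => - (lin N (blkb N r) 0 (dco N) j * unitval N zu su zv sv j))) by (intros; ring).
      rewrite sumn_opp, lin_sum. unfold unitval, unitb, blkb, posn in *. unfold Mn in *.
      apply Nat.ltb_ge in E1. apply Nat.ltb_lt in E2.
      destruct (Nat.ltb_spec r (Bn N)); simpl; ltbs; f_equal; lra.
    + rewrite lin_sum. unfold unitval, unitb, blkb, posn in *. unfold Mn in *.
      apply Nat.ltb_ge in E1. apply Nat.ltb_ge in E2.
      destruct (Nat.ltb_spec r (Bn N)); simpl; ltbs; f_equal; lra.
Qed.

Definition s0 (b:bool) (j:nat) : R := if b then (if Nat.eqb j 0 then /2 else -/2) else /2.
Definition A0 N r j :=
  if Nat.ltb (posn N r) N then s0 (blkb N r) j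
  else if Nat.ltb (posn N r) (2*N) then - s0 (blkb N r) j else 0.
Definition lay0 N := mkLayer 2 (Mn N) (A0 N) (biasf N).

Lemma lay0_spec N x y :
  relu_layer (lay0 N) (vec2 x y) = unitval N ((x+y)/2) 0 ((x-y)/2) 0.
Proof.
  apply functional_extensionality. intros r.
  unfold relu_layer, affine. simpl l_out. simpl l_in. simpl l_A. simpl l_b.
  rewrite sum_guard. simpl sumn. unfold vec2.
  destruct (Nat.ltb_spec r (Mn N)).
  2:{ unfold unitval, Mn, Bn in *. ltbs. reflexivity. }
  unfold A0, biasf, unitval, unitb, blkb, posn, s0. unfold Mn in *.
  destruct (Nat.ltb_spec r (Bn N)); simpl; ltbs; simpl; f_equal; lra.
Qed.

Definition outA N c (r j : nat) := lin N false 1 (qcoef N c) j - lin N true 1 (qcoef N c) j.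
Definition outl N c := mkLayer (Mn N) 1 (outA N c) (fun _ => 0).

Lemma sumn_sub n f g : sumn n (fun i => f i - g i) = sumn n f - sumn n g.
Proof. induction n; simpl; [lra| rewrite IHn; lra]. Qed.

Lemma outl_spec N c zu su zv sv :
  affine (outl N c) (unitval N zu su zv sv) 0%nat
  = (relu su + Phi N (qcoef N c) zu) - (relu sv + Phi N (qcoef N c) zv).
Proof.
  unfold affine. simpl l_out. simpl l_in. simpl l_A. simpl l_b. simpl Nat.ltb. cbv iota.
  rewrite sum_guard. unfold outA.
  rewrite (sumn_ext _ _ (fun j => lin N false 1 (qcoef N c) j * unitval N zu su zv sv j
      - lin N true 1 (qcoef N c) j * unitval N zu su zv sv j)) by (intros; ring).
  rewrite sumn_sub, !lin_sum. change (Nat.ltb 0 1) with true. cbn iota. ring.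
Qed.

Fixpoint st N (u:R) (l:nat) : R*R :=
  match l with
  | O => (u, 0)
  | S l' => (Phi N (dco N) (fst (st N u l')),
             relu (snd (st N u l')) + Phi N (scoef N (/ INR N ^ (2*l'))) (fst (st N u l')))
  end.

Definition mids N s n := map (fun l => mid N (/ INR N ^ (2*l))) (seq s n).

Lemma fold_spec N u v n s :
  fold_left (fun g l => relu_layer l g) (mids N s n)
    (unitval N (fst (st N u s)) (snd (st N u s)) (fst (st N v s)) (snd (st N v s)))
  = unitval N (fst (st N u (s+n))) (snd (st N u (s+n))) (fst (st N v (s+n))) (snd (st N v (s+n))).
Proof.
  revert s. induction n; intros s.
  - rewrite Nat.add_0_r. reflexivity.
  - unfold mids. simpl seq. simpl map. simpl fold_left. rewrite mid_spec.
    replace (s + S n)%nat with (S s + n)%nat by lia.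
    apply (IHn (S s)).
Qed.



Lemma sumn_lin3 n c a b d m (h : nat -> R) :
  sumn n (fun i => c * (a i - b i - d i / m) * h i)
  = c * (sumn n (fun i => a i * h i) - sumn n (fun i => b i * h i) - sumn n (fun i => d i * h i) / m).
Proof. induction n; simpl. unfold Rdiv; ring. rewrite IHn. unfold Rdiv; ring. Qed.

Lemma sumn_lin2 n c a b (h : nat -> R) :
  sumn n (fun i => c * (a i - b i) * h i)
  = c * (sumn n (fun i => a i * h i) - sumn n (fun i => b i * h i)).
Proof. induction n; simpl. ring. rewrite IHn. ring. Qed.

Lemma G_scoef N c w : G N (scoef N c) w
  = c * (G N dlt w - G N (eco N) w - G N (dco N) w / (INR N * INR N)).
Proof. unfold G, scoef. apply sumn_lin3. Qed.

Lemma G_qcoef N c w : G N (qcoef N c) w = c * (G N dlt w - G N (eco N) w).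
Proof. unfold G, qcoef. apply sumn_lin2. Qed.

Definition Inv N u l : Prop :=
  0 <= snd (st N u l) /\ Rabs (fst (st N u l)) <= 1 /\
  u * u = snd (st N u l) + fst (st N u l) * fst (st N u l) / INR N ^ (2*l) /\
  snd (st N u l) + Rabs (fst (st N u l)) / INR N ^ (2*l) <= 1.

Lemma pow_step n l : n ^ (2 * S l) = n ^ (2*l) * (n * n).
Proof. replace (2 * S l)%nat with (2*l + 2)%nat by lia. rewrite pow_add. simpl. ring. Qed.

Lemma inv_all N u l : (1 <= N)%nat -> Rabs u <= 1 -> Inv N u l.
Proof.
  intros HN Hu. assert (Hn: 1 <= INR N) by (apply (le_INR 1); lia).
  induction l.
  - unfold Inv; simpl. repeat split; try lra.
  - destruct IHl as [Hs [Hz [He Hb]]].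
    set (z := fst (st N u l)) in *. set (s := snd (st N u l)) in *.
    set (P := INR N ^ (2*l)) in *.
    assert (HP: 0 < P) by (apply pow_lt; lra).
    assert (HPs: INR N ^ (2 * S l) = P * (INR N * INR N)) by apply pow_step.
    unfold Inv. rewrite HPs. cbn [st fst snd]. fold z s P.
    rewrite !Phi_G, G_scoef. rewrite relu_pos by lra.
    set (w := Rabs z) in *.
    assert (Hw: 0 <= w <= 1) by (split; [apply Rabs_pos|lra]).
    destruct (step N w HN Hw) as [H1 [H2 [H3 [H4 H5]]]].
    rewrite H1.
    set (Z := G N (dco N) w) in *. set (E := G N (eco N) w) in *.
    set (n := INR N) in *.
    assert (Hnn: 0 < n * n) by nra.
    rewrite Rabs_right by lra.
    assert (HiP: 0 < / P) by (apply Rinv_0_lt_compat; lra).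
    split. assert (0 <= / P * (w - E - Z / (n*n))) by (apply Rmult_le_pos; lra). lra.
    split. lra.
    split.
    + rewrite He. replace (z*z) with (w*w) by apply abs_sq. rewrite H4. field. lra.
    + replace (s + / P * (w - E - Z / (n * n)) + Z / (P * (n * n))) with (s + w / P - E / P)
        by (field; lra).
      assert (0 <= E / P) by (apply Rdiv_le_0_compat; lra). lra.
Qed.

Lemma final N u l : (1 <= N)%nat -> Rabs u <= 1 ->
  let Q := relu (snd (st N u l)) + Phi N (qcoef N (/ INR N ^ (2*l))) (fst (st N u l)) in
  Q <= 1 /\ 0 <= Q - u * u <= / (4 * INR N ^ (2 * S l)).
Proof.
  intros HN Hu Q. assert (Hn: 1 <= INR N) by (apply (le_INR 1); lia).
  destruct (inv_all N u l HN Hu) as [Hs [Hz [He Hb]]].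
  unfold Q; clear Q.
  set (z := fst (st N u l)) in *. set (s := snd (st N u l)) in *.
  set (P := INR N ^ (2*l)) in *.
  assert (HP: 0 < P) by (apply pow_lt; lra).
  rewrite pow_step. fold P.
  rewrite Phi_G, G_qcoef. rewrite relu_pos by lra.
  set (w := Rabs z) in *.
  assert (Hw: 0 <= w <= 1) by (split; [apply Rabs_pos|lra]).
  destruct (step N w HN Hw) as [H1 [H2 [H3 [H4 H5]]]].
  rewrite H1.
  set (Z := G N (dco N) w) in *. set (E := G N (eco N) w) in *.
  set (n := INR N) in *.
  assert (Hnn: 0 < n * n) by nra.
  replace (z*z) with (w*w) in He by apply abs_sq.
  split.
  - assert (0 <= E / P) by (apply Rdiv_le_0_compat; lra).
    replace (s + / P * (w - E)) with (s + w / P - E / P) by (field; lra). lra.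
  - rewrite He, H4.
    replace (s + / P * (w - E) - (s + (w - E - Z / (n * n) + Z * Z / (n * n)) / P))
      with ((Z - Z*Z) / (P * (n*n))) by (field; lra).
    split. apply Rdiv_le_0_compat; nra.
    replace (/ (4 * (P * (n * n)))) with ((1/4) / (P * (n*n))) by (field; lra).
    unfold Rdiv. apply Rmult_le_compat_r; [apply Rlt_le, Rinv_0_lt_compat; nra|]. assert (0 <= (2*Z-1)*(2*Z-1)) by apply Rle_0_sqr. lra.
Qed.

Definition net N L := mkNet (lay0 N :: mids N 0 (L-1)) (outl N (/ INR N ^ (2*(L-1)))).

Lemma chain_mids N c s n : chain (Mn N) (mids N s n) (outl N c).
Proof. revert s. induction n; intros s; simpl. reflexivity. split. reflexivity. apply IHn. Qed.

Lemma realize_net N L x y : (1 <= L)%nat ->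
  realize (net N L) (vec2 x y) 0%nat =
  (relu (snd (st N ((x+y)/2) (L-1))) + Phi N (qcoef N (/ INR N ^ (2*(L-1)))) (fst (st N ((x+y)/2) (L-1))))
  - (relu (snd (st N ((x-y)/2) (L-1))) + Phi N (qcoef N (/ INR N ^ (2*(L-1)))) (fst (st N ((x-y)/2) (L-1)))).
Proof. intros HL. unfold realize, net. cbn [hidden output fold_left].
  rewrite lay0_spec.
  change (unitval N ((x + y) / 2) 0 ((x - y) / 2) 0) with
    (unitval N (fst (st N ((x+y)/2) 0)) (snd (st N ((x+y)/2) 0)) (fst (st N ((x-y)/2) 0)) (snd (st N ((x-y)/2) 0))).
  rewrite fold_spec. simpl (0 + (L-1))%nat. apply outl_spec. Qed.

Theorem mainTheorem9 (k L : nat) (hk : (4 <= k)%nat) (hL : (1 <= L)%nat) :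
  exists N : network,
    in_NN 2 1 (3 * k * 2 ^ k + 3) L N /\
    (forall x y, -1 <= x <= 1 -> -1 <= y <= 1 ->
       -1 <= realize N (vec2 x y) 0%nat <= 1) /\
    (forall x y, -1 <= x <= 1 -> -1 <= y <= 1 ->
       Rabs (realize N (vec2 x y) 0%nat - x * y)
         <= / 2 ^ (2 * k * L + 1)).
Proof.
  set (N := (2 ^ k)%nat).
  assert (HN : (1 <= N)%nat) by (unfold N; apply Nat.le_succ_l, Nat.neq_0_lt_0, Nat.pow_nonzero; lia).
  exists (net N L). split; [|split].
  - unfold in_NN, net. cbn [hidden output]. split; [|split; [|split]].
    + simpl length. unfold mids. rewrite length_map, length_seq. lia.
    + split. reflexivity. apply chain_mids.
    + reflexivity.
    + intros l Hl. destruct Hl as [Hl|Hl].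
      * subst l. simpl. unfold Mn, Bn, N.
        assert (4 * 2^k <= 3 * k * 2^k)%nat by (apply Nat.mul_le_mono_r; lia). lia.
      * unfold mids in Hl. apply in_map_iff in Hl. destruct Hl as [m [Hm _]]. subst l. simpl.
        unfold Mn, Bn, N.
        assert (4 * 2^k <= 3 * k * 2^k)%nat by (apply Nat.mul_le_mono_r; lia). lia.
  - intros x y Hx Hy. rewrite realize_net by lia.
    assert (Hu: Rabs ((x+y)/2) <= 1) by (apply Rabs_le; lra).
    assert (Hv: Rabs ((x-y)/2) <= 1) by (apply Rabs_le; lra).
    destruct (final N ((x+y)/2) (L-1) HN Hu) as [Qu1 Qu2].
    destruct (final N ((x-y)/2) (L-1) HN Hv) as [Qv1 Qv2].
    assert (0 <= (x+y)/2 * ((x+y)/2)) by apply Rle_0_sqr.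
    assert (0 <= (x-y)/2 * ((x-y)/2)) by apply Rle_0_sqr.
    lra.
  - intros x y Hx Hy. rewrite realize_net by lia.
    assert (Hu: Rabs ((x+y)/2) <= 1) by (apply Rabs_le; lra).
    assert (Hv: Rabs ((x-y)/2) <= 1) by (apply Rabs_le; lra).
    destruct (final N ((x+y)/2) (L-1) HN Hu) as [Qu1 Qu2].
    destruct (final N ((x-y)/2) (L-1) HN Hv) as [Qv1 Qv2].
    replace (S (L-1)) with L in Qu2, Qv2 by lia.
    assert (HP: INR N ^ (2 * L) = 2 ^ (2*k*L)).
    { unfold N. rewrite pow_INR. simpl (INR 2). rewrite <- pow_mult. f_equal. lia. }
    rewrite HP in Qu2, Qv2.
    assert (Hpos: 0 < 2 ^ (2*k*L)) by (apply pow_lt; lra).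
    assert (Hb: / (4 * 2 ^ (2*k*L)) <= / 2 ^ (2*k*L+1)).
    { rewrite pow_add, pow_1. apply Rinv_le_contravar; lra. }
    assert (Hxy: x * y = (x+y)/2 * ((x+y)/2) - (x-y)/2 * ((x-y)/2)) by field.
    apply Rabs_le. rewrite Hxy. lra.
Qed.
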